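(* Let $(\Lambda,d)$ be a rank-2 Bratteli diagram of depth $N$, with $\Lambda^0=\bigsqcup_n\bigsqcup_{j=1}^{c_n}V_{n,j}$ as described in the context. For $0\le n<N$, $1\le j\le c_n$ and $1\le i\le c_{n+1}$: (1) the sets $v\Lambda^{e_1}V_{n+1,i}$, $v\in V_{n,j}$, all have the same cardinality, denoted $A_n(i,j)$; (2) the sets $V_{n,j}\Lambda^{e_1}w$, $w\in V_{n+1,i}$, all have the same cardinality, denoted $B_n(i,j)$; (3) $A_n(i,j)\,|V_{n,j}|=|V_{n,j}\Lambda^{e_1}V_{n+1,i}|=|V_{n+1,i}|\,B_n(i,j)$. The resulting matrices $A_n,B_n\in M_{c_{n+1},c_n}(\mathbb Z_+)$ have no zero rows or columns. Letting $T_n\in M_{c_n}(\mathbb Z_+)$ be the diagonal matrix with $T_n(j,j)=|V_{n,j}|$, we have $A_nT_n=T_{n+1}B_n$ for $0\le n<N$.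
   Context: A $2$-graph is a countable category $\Lambda$ with a functor $d:\Lambda\to\mathbb N^2$ satisfying unique factorisation (if $d(\lambda)=m+n$ there are unique $\mu,\nu$ with $d(\mu)=m,d(\nu)=n,\lambda=\mu\nu$). Vertices $\Lambda^0$ = degree-$0$ paths; $r,s$ range/source; $\Lambda^n=d^{-1}(n)$; $e_1=(1,0),e_2=(0,1)$; $VEW=\{\lambda\in E:r(\lambda)\in V,s(\lambda)\in W\}$ (write $v$ for $\{v\}$). Row-finite: each $v\Lambda^n$ finite. Blue edges: $\Lambda^{e_1}$; red edges: $\Lambda^{e_2}$; red paths: degree in $\mathbb Ne_2$. $\lambda(m,n)$ is the unique path with $\lambda=\lambda'\lambda(m,n)\lambda''$, $d(\lambda')=m$, $d(\lambda(m,n))=n-m$, $\lambda(n)=\lambda(n,n)$. A cycle: $d(\lambda)\ne0$, $r(\lambda)=s(\lambda)$, $\lambda(n)\ne s(\lambda)$ for $0<n<d(\lambda)$; isolated: no $n\le d(\lambda)$ with $r(\lambda)\Lambda^n\setminus\{\lambda(0,n)\}\ne\emptyset$ and no $n\le d(\lambda)$ with $\Lambda^ns(\lambda)\setminus\{\lambda(d(\lambda)-n,d(\lambda))\}\ne\emptyset$. A rank-2 Bratteli diagram of depth $N\in\mathbb N\cup\{\infty\}$ is a row-finite 2-graph with $\Lambda^0=\bigsqcup_{0\le n\le N}V_n$ ($n$ ranging over all of $\mathbb N$ if $N=\infty$), each $V_n$ nonempty and finite, such that: (1) every blue edge $e$ has $r(e)\in V_n$, $s(e)\in V_{n+1}$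 for some $n$; (2) every vertex $v$ with $\Lambda^{e_1}v=\emptyset$ lies in $V_0$ and every vertex $v$ with $v\Lambda^{e_1}=\emptyset$ lies in $V_N$ (if $N=\infty$ there is no vertex with $v\Lambda^{e_1}=\emptyset$); (3) every vertex lies on an isolated cycle consisting of red edges, and every red edge has range and source in the same $V_n$. Consequently each $V_n=\bigsqcup_{j=1}^{c_n}V_{n,j}$ where the $V_{n,j}$ are the vertex sets of the distinct isolated red cycles meeting $V_n$. *)

(* Defs.v *)
From HB Require Import structures.
From mathcomp Require Import all_boot all_order all_algebra.
Set Implicit Arguments. Unset Strict Implicit. Unset Printing Implicit Defensive.

Definition addN2 (m n : nat * nat) : nat * nat := (m.1 + n.1, m.2 + n.2)%N.
Definition subN2 (m n : nat * nat) : nat * nat := (m.1 - n.1, m.2 - n.2)%N.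
Definition leN2 (m n : nat * nat) : Prop := (m.1 <= n.1)%N /\ (m.2 <= n.2)%N.
Definition e1 : nat * nat := (1, 0)%N.
Definition e2 : nat * nat := (0, 1)%N.
Definition zero2 : nat * nat := (0, 0)%N.

(* A 2-graph: a countable category (objects = vertices, identified with the
   degree-0 paths via [id]) with a degree functor to N^2 satisfying unique
   factorisation.  Composition is total, but only meaningful for composable
   pairs (sr mu = rg nu); all axioms refer only to composable pairs. *)
Record twograph := TwoGraph {
  obj : countType;
  mor : countType;
  id : obj -> mor;
  rg : mor -> obj;
  sr : mor -> obj;
  comp : mor -> mor -> mor;
  deg : mor -> nat * nat;
  rg_id : forall v, rg (id v) = v;
  sr_id : forall v, sr (id v) = v;
  rg_comp : forall mu nu, sr mu = rg nu -> rg (comp mu nu) = rg mu;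
  sr_comp : forall mu nu, sr mu = rg nu -> sr (comp mu nu) = sr nu;
  comp_id_l : forall mu, comp (id (rg mu)) mu = mu;
  comp_id_r : forall mu, comp mu (id (sr mu)) = mu;
  comp_assoc : forall a b c, sr a = rg b -> sr b = rg c ->
      comp a (comp b c) = comp (comp a b) c;
  deg_id : forall v, deg (id v) = zero2;
  deg_comp : forall mu nu, sr mu = rg nu -> deg (comp mu nu) = addN2 (deg mu) (deg nu);
  unique_fact : forall lam m n, deg lam = addN2 m n ->
      exists! p : mor * mor,
        [/\ deg p.1 = m, deg p.2 = n, sr p.1 = rg p.2 & comp p.1 p.2 = lam]
}.

Section TwoGraphDefs.
Variable G : twograph.

Definition has_card (T : eqType) (P : T -> Prop) (k : nat) : Prop :=
  exists s : seq T, [/\ uniq s, size s = k & forall x, P x <-> x \in s].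
Definition finite_set (T : eqType) (P : T -> Prop) : Prop :=
  exists k, has_card P k.

Definition row_finite : Prop :=
  forall (v : obj G) n, finite_set (fun lam : mor G => rg lam = v /\ deg lam = n).

Definition seg (lam : mor G) (m n : nat * nat) (mu : mor G) : Prop :=
  exists a b : mor G, [/\ deg a = m, deg mu = subN2 n m, sr a = rg mu,
                          sr mu = rg b & lam = comp a (comp mu b)].

Definition vtx (lam : mor G) (n : nat * nat) (v : obj G) : Prop :=
  seg lam n n (id v).

Definition is_cycle (lam : mor G) : Prop :=
  [/\ deg lam <> zero2, rg lam = sr lam &
      forall n, leN2 n (deg lam) -> n <> zero2 -> n <> deg lam ->
        forall v, vtx lam n v -> v <> sr lam].

Definition isolated (lam : mor G) : Prop :=
  forall n, leN2 n (deg lam) ->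
    (forall mu, rg mu = rg lam -> deg mu = n -> seg lam zero2 n mu) /\
    (forall mu, sr mu = sr lam -> deg mu = n ->
        seg lam (subN2 (deg lam) n) (deg lam) mu).

Definition red_path (lam : mor G) : Prop := (deg lam).1 = 0%N.

Definition iso_red_cycle (lam : mor G) : Prop :=
  [/\ is_cycle lam, isolated lam & red_path lam].

Definition on_path (lam : mor G) (v : obj G) : Prop :=
  exists k, leN2 k (deg lam) /\ vtx lam k v.

Definition blue (e : mor G) : Prop := deg e = e1.
Definition red (e : mor G) : Prop := deg e = e2.

(* depth N in N \cup {oo}: None = oo *)
Definition in_depth (N : option nat) (n : nat) : Prop :=
  match N with Some N0 => (n <= N0)%N | None => True end.
Definition lt_depth (N : option nat) (n : nat) : Prop :=
  match N with Some N0 => (n < N0)%N | None => True end.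

(* Rank-2 Bratteli diagram of depth N; V_n = level^-1(n). *)
Definition bratteli (N : option nat) (level : obj G -> nat) : Prop :=
  row_finite /\
      (forall v, in_depth N (level v)) /\
      (forall n, in_depth N n ->
          (exists v, level v = n) /\ finite_set (fun v => level v = n)) /\
      (forall e, blue e -> level (sr e) = (level (rg e)).+1) /\
      (forall v, (forall e, blue e -> sr e <> v) -> level v = 0%N) /\
      (forall v, (forall e, blue e -> rg e <> v) -> N = Some (level v)) /\
      (forall v, exists lam, iso_red_cycle lam /\ on_path lam v) /\
      (forall e, red e -> level (rg e) = level (sr e)).

Definition cycle_enum (level : obj G -> nat) (n c : nat)
    (Vs : 'I_c -> obj G -> Prop) : Prop :=
  [/\ (forall j, exists lam, [/\ iso_red_cycle lam,
                               (forall v, Vs j v <-> on_path lam v) &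
                               exists v, on_path lam v /\ level v = n]),
      (forall lam, iso_red_cycle lam -> (exists v, on_path lam v /\ level v = n) ->
          exists j, forall v, Vs j v <-> on_path lam v) &
      (forall j j', (forall v, Vs j v <-> Vs j' v) -> j = j')].

End TwoGraphDefs.

(* Main.v *)
Require Import Defs.
From HB Require Import structures.
From mathcomp Require Import all_boot all_order all_algebra.
From mathcomp Require Import zify.
From Stdlib Require Import Classical IndefiniteDescription.

Lemma fchoice (I : Type) (P : I -> nat -> Prop) :
  (forall i, exists k, P i k) -> exists f, forall i, P i (f i).
Proof.
move=> H; exists (fun i => proj1_sig (constructive_indefinite_description _ (H i))).
move=> i; exact: proj2_sig (constructive_indefinite_description _ (H i)).
Qed.

Lemma has_card_ext (T : eqType) (P Q : T -> Prop) k :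
  (forall x, P x <-> Q x) -> has_card P k -> has_card Q k.
Proof. by move=> H [s [Hu Hs Hm]]; exists s; split=> // x; rewrite -H. Qed.

Lemma has_card_uniq (T : eqType) (P : T -> Prop) k k' :
  has_card P k -> has_card P k' -> k = k'.
Proof.
move=> [s [Hu <- Hm]] [s' [Hu' <- Hm']]; apply: perm_size; apply: uniq_perm => // x.
by apply/idP/idP => H; [apply/Hm'/Hm | apply/Hm/Hm'].
Qed.

Lemma has_card_pos (T : eqType) (P : T -> Prop) k x :
  has_card P k -> P x -> k <> 0.
Proof. by move=> [s [_ <- Hm]] /Hm; case: s {Hm}. Qed.

Lemma has_card_bij (T U : eqType) (P : T -> Prop) (Q : U -> Prop) (R : T -> U -> Prop) k :
 (forall x, P x -> exists y, Q y /\ R x y) ->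
 (forall y, Q y -> exists x, P x /\ R x y) ->
 (forall x x' y, P x -> P x' -> Q y -> R x y -> R x' y -> x = x') ->
 (forall x y y', P x -> Q y -> Q y' -> R x y -> R x y' -> y = y') ->
 has_card P k -> has_card Q k.
Proof.
move=> H1 H2 H3 H4 [s [Hu Hsz Hm]]; subst k.
elim: s P Q R H1 H2 H3 H4 Hu Hm => [|x s IH] P Q R H1 H2 H3 H4 Hu Hm.
  exists [::]; split => // y; split => // /H2 [x [Px _]].
  by move: (proj1 (Hm x) Px); rewrite in_nil.
have Px : P x by apply/Hm; rewrite in_cons eqxx.
have [y [Qy Rxy]] := H1 x Px.
move: Hu => /andP [xs Hu].
have G1 : forall z, P z /\ z <> x -> exists w, (Q w /\ w <> y) /\ R z w.
  move=> z [Pz nzx]; have [w [Qw Rzw]] := H1 z Pz; exists w; split => //; split => //.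
  by move=> Ewy; subst w; apply: nzx; exact: H3 Pz Px Qy Rzw Rxy.
have G2 : forall w, Q w /\ w <> y -> exists z, (P z /\ z <> x) /\ R z w.
  move=> w [Qw nwy]; have [z [Pz Rzw]] := H2 w Qw; exists z; split => //; split => //.
  by move=> Ezx; subst z; apply: nwy; exact: H4 Px Qw Qy Rzw Rxy.
have G3 : forall z z' w, P z /\ z <> x -> P z' /\ z' <> x -> Q w /\ w <> y -> R z w -> R z' w -> z = z'.
  by move=> z z' w [Pz _] [Pz' _] [Qw _]; apply: H3.
have G4 : forall z w w', P z /\ z <> x -> Q w /\ w <> y -> Q w' /\ w' <> y -> R z w -> R z w' -> w = w'.
  by move=> z w w' [Pz _] [Qw _] [Qw' _]; apply: H4.
have G5 : forall z, (P z /\ z <> x) <-> z \in s.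
  move=> z; split.
    move=> [Pz nzx]; move: (proj1 (Hm z) Pz); rewrite in_cons.
    by case/orP => // /eqP.
  move=> zs; split; first by apply/Hm; rewrite in_cons zs orbT.
  by move=> E; subst z; rewrite zs in xs.
have [s' [Hu' Hsz' Hm']] := IH _ _ R G1 G2 G3 G4 Hu G5.
exists (y :: s'); split => /=.
- apply/andP; split => //; apply/negP => /Hm' [_ ]; done.
- by rewrite Hsz'.
- move=> w; rewrite in_cons; case: (eqVneq w y) => [->|nwy] /=; first by split.
  by rewrite -Hm'; split => [Qw|[]]; [split; [|apply/eqP]|].
Qed.

Lemma has_card_bij_iff (T U : eqType) (P : T -> Prop) (Q : U -> Prop) (R : T -> U -> Prop) k :
 (forall x, P x -> exists y, Q y /\ R x y) ->
 (forall y, Q y -> exists x, P x /\ R x y) ->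
 (forall x x' y, P x -> P x' -> Q y -> R x y -> R x' y -> x = x') ->
 (forall x y y', P x -> Q y -> Q y' -> R x y -> R x y' -> y = y') ->
 has_card P k <-> has_card Q k.
Proof.
move=> H1 H2 H3 H4; split; first exact: has_card_bij H1 H2 H3 H4.
apply: (@has_card_bij U T Q P (fun y x => R x y) k).
- move=> y /H2 [x [? ?]]; by exists x.
- move=> x /H1 [y [? ?]]; by exists y.
- move=> y y' x Qy Qy' Px R1 R2; exact: H4 Px Qy Qy' R1 R2.
- move=> y x x' Qy Px Px' R1 R2; exact: H3 Px Px' Qy R1 R2.
Qed.

Lemma has_card_fiber (T U : eqType) (f : T -> U) (F : T -> Prop) (V : U -> Prop) t a :
  has_card V t -> (forall v, V v -> has_card (fun e => F e /\ f e = v) a) ->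
  has_card (fun e => F e /\ V (f e)) (a * t).
Proof.
move=> [s [Hu Hsz Hm]]; subst t.
elim: s V Hu Hm => [|v s IH] V Hu Hm Hfib.
  exists [::]; split; [done | by rewrite /= muln0 | move=> e].
  by split => // [[_ /Hm]]; rewrite in_nil.
have Vv : V v by apply/Hm; rewrite in_cons eqxx.
have [s1 [Hu1 Hs1 Hm1]] := Hfib v Vv.
move: Hu => /andP [vs Hu].
have G5 : forall z, (V z /\ z <> v) <-> z \in s.
  move=> z; split.
    move=> [Pz nzx]; move: (proj1 (Hm z) Pz); rewrite in_cons.
    by case/orP => // /eqP.
  move=> zs; split; first by apply/Hm; rewrite in_cons zs orbT.
  by move=> E; subst z; rewrite zs in vs.
have G6 : forall u, V u /\ u <> v -> has_card (fun e => F e /\ f e = u) a.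
  by move=> u [Vu _]; apply: Hfib.
have [s2 [Hu2 Hs2 Hm2]] := IH (fun u => V u /\ u <> v) Hu G5 G6.
exists (s1 ++ s2); split.
- rewrite cat_uniq Hu1 Hu2 /= andbT; apply/hasPn => e /Hm2 [_ [_ H]].
  by apply/negP => /Hm1 [_ H']; apply: H.
- by rewrite size_cat Hs1 Hs2 mulnS.
- move=> e; rewrite mem_cat; split.
    move=> [Fe Ve]; case: (eqVneq (f e) v) => [E|ne].
      by apply/orP; left; apply/Hm1.
    by apply/orP; right; apply/Hm2; split => //; split => //; apply/eqP.
  case/orP => [/Hm1 [Fe E] | /Hm2 [Fe [Ve _]] //].
  by split => //; rewrite E.
Qed.

Lemma finite_sub (T : eqType) (P : T -> Prop) (s : seq T) :
  (forall x, P x -> x \in s) -> finite_set P.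
Proof.
elim: s P => [|y s IH] P H.
  by exists 0, [::]; split => // x; split => // /H.
have G : forall x, P x /\ x <> y -> x \in s.
  by move=> x [Px nxy]; move: (H x Px); rewrite in_cons; case/orP => // /eqP.
have [k [s' [Hu _ Hm]]] := IH (fun x => P x /\ x <> y) G.
case: (classic (P y)) => Py.
  exists (size s').+1, (y :: s'); split => //.
    by rewrite /= Hu andbT; apply/negP => /Hm [_]; apply.
  move=> x; rewrite in_cons; case: (eqVneq x y) => [->|nxy] /=; first by split.
  rewrite -Hm; split => [Px|[] //]; split => // E; subst.
  by rewrite eqxx in nxy.
exists (size s'), s'; split => // x; rewrite -Hm; split => [Px|[] //].
by split => // E; subst.
Qed.

Notation idv := (@Defs.id _).
Notation cmp := (@Defs.comp _).

Ltac solve2 :=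
  unfold addN2, subN2, leN2, zero2, e1, e2, red, blue in *;
  repeat match goal with
   | H : @eq (nat*nat) _ _ |- _ => let H1 := fresh in let H2 := fresh in
       have H1 := f_equal fst H; have H2 := f_equal snd H; clear H; simpl in H1, H2
   end;
  repeat match goal with H : _ /\ _ |- _ => destruct H end;
  try (apply: injective_projections; simpl);
  try split; simpl in *; lia.

Lemma finite_index (T : eqType) (P : T -> Prop) (Q : nat -> T -> Prop) m :
 (forall x, P x -> exists k, k < m /\ Q k x) ->
 (forall k x y, Q k x -> Q k y -> x = y) -> finite_set P.
Proof.
move=> HP HQ.
suff [s Hs] : exists s : seq T, forall x, (exists k, k < m /\ Q k x) -> x \in s.
  apply: (@finite_sub _ P s) => x Px; apply: Hs; exact: HP.
elim: m {HP} => [|m [s Hs]]; first by exists [::] => x [k [Hk _]].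
case: (classic (exists x, Q m x)) => [[x0 Hx0]|nQ].
  exists (x0 :: s) => x [k [Hk Qx]]; rewrite in_cons.
  have [lt|ge] := ltnP k m; first by rewrite Hs ?orbT //; exists k.
  have E : k = m by lia.
  by subst k; rewrite (HQ _ _ _ Qx Hx0) eqxx.
exists s => x [k [Hk Qx]]; have [lt|ge] := ltnP k m; first by apply: Hs; exists k.
have E : k = m by lia.
by subst k; case: nQ; exists x.
Qed.


Set Implicit Arguments. Unset Strict Implicit.

Lemma deg0 (G : twograph) (x : mor G) : deg x = zero2 -> x = idv (rg x).
Proof.
move=> Hx.
have H : deg x = addN2 zero2 zero2 by rewrite Hx.
case: (unique_fact H) => [[p q] [_ Hu]].
have E1 : (p, q) = (idv (rg x), x).
  by apply: Hu; split; rewrite /= ?deg_id ?sr_id ?comp_id_l.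
have E2 : (p, q) = (x, idv (sr x)).
  by apply: Hu; split; rewrite /= ?deg_id ?rg_id ?comp_id_r.
by rewrite E1 in E2; case: E2 => ->.
Qed.

Lemma comp0l (G : twograph) (x z : mor G) : deg x = zero2 -> sr x = rg z -> cmp x z = z.
Proof.
move=> Hx Hs; have E := deg0 Hx.
have E' : rg x = rg z by rewrite -Hs {2}E sr_id.
by rewrite {1}E E' comp_id_l.
Qed.

Lemma comp0r (G : twograph) (z y : mor G) : deg y = zero2 -> sr z = rg y -> cmp z y = z.
Proof.
by move=> Hy Hs; rewrite (deg0 Hy) -Hs comp_id_r.
Qed.

Lemma uf_ex (G : twograph) (lam : mor G) m n : deg lam = addN2 m n ->
  exists a b, [/\ deg a = m, deg b = n, sr a = rg b & cmp a b = lam].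
Proof. by move=> H; case: (unique_fact H) => [[a b] [[? ? ? ?] _]]; exists a, b. Qed.

Lemma uf_inj (G : twograph) (a b a' b' : mor G) : sr a = rg b -> sr a' = rg b' ->
  deg a = deg a' -> deg b = deg b' -> cmp a b = cmp a' b' -> a = a' /\ b = b'.
Proof.
move=> H1 H2 H3 H4 E.
have H : deg (cmp a b) = addN2 (deg a) (deg b) by rewrite deg_comp.
case: (unique_fact H) => [p [_ Hu]].
have E1 := Hu (a, b) (And4 erefl erefl H1 erefl).
have E2 := Hu (a', b') (And4 (esym H3) (esym H4) H2 (esym E)).
by rewrite E1 in E2; case: E2.
Qed.

Lemma uf_injl (G : twograph) (a b a' b' : mor G) : sr a = rg b -> sr a' = rg b' ->
  deg a = deg a' -> cmp a b = cmp a' b' -> a = a' /\ b = b'.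
Proof.
move=> H1 H2 H3 E; apply: uf_inj => //.
have := deg_comp H1; have := deg_comp H2; rewrite -E H3 => ->.
move: (deg a') (deg b) (deg b') => p q r; case: p q r => ? ? [? ?] [? ?]; rewrite /addN2 /=.
case=> ? ?; f_equal; lia.
Qed.

Lemma uf_injr (G : twograph) (a b a' b' : mor G) : sr a = rg b -> sr a' = rg b' ->
  deg b = deg b' -> cmp a b = cmp a' b' -> a = a' /\ b = b'.
Proof.
move=> H1 H2 H3 E; apply: uf_inj => //.
have := deg_comp H1; have := deg_comp H2; rewrite -E H3 => ->.
move: (deg a') (deg a) (deg b') => p q r; case: p q r => ? ? [? ?] [? ?]; rewrite /addN2 /=.
case=> ? ?; f_equal; lia.
Qed.

Lemma vtxP (G : twograph) (lam : mor G) n v : vtx lam n v <->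
  exists a b, [/\ deg a = n, sr a = v, rg b = v & lam = cmp a b].
Proof.
split.
  case=> a [b [Ha Hid Hs Hs' E]]; rewrite rg_id in Hs; rewrite sr_id in Hs'.
  exists a, b; split => //; by rewrite E Hs' comp_id_l.
case=> a [b [Ha Hs Hb E]]; subst v; exists a, b; split => //.
- by rewrite deg_id; case: n {Ha} => ? ?; rewrite /subN2 /= !subnn.
- by rewrite rg_id.
- by rewrite sr_id.
- by rewrite -Hb comp_id_l.
Qed.

Lemma on_pathP (G : twograph) (lam : mor G) v : red_path lam ->
  (on_path lam v <-> exists k, k <= (deg lam).2 /\ vtx lam (0,k) v).
Proof.
move=> Hr; split.
  case=> [[k1 k2] [[Hk1 Hk2] Hv]]; exists k2; split => //.
  have E : k1 = 0 by move: Hk1; rewrite /red_path in Hr; rewrite Hr /=; lia.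
  by subst k1.
case=> k [Hk Hv]; exists (0, k); split => //; split => //.
Qed.

Lemma cyc_deg (G : twograph) (lam : mor G) : iso_red_cycle lam -> (deg lam).1 = 0 /\ 0 < (deg lam).2.
Proof.
case=> [[Hne _ _] _ Hr]; split => //; move: Hne Hr; rewrite /red_path.
case: (deg lam) => a b /= Hne Ha; subst a; case: b Hne => // H; by case: H.
Qed.

Lemma cycle_const (G : twograph) (lam : mor G) (Phi : obj G -> Prop) v :
  red_path lam -> (forall f, red f -> (Phi (sr f) <-> Phi (rg f))) ->
  on_path lam v -> (Phi v <-> Phi (rg lam)).
Proof.
move=> Hr HP /(on_pathP _ Hr) [k [_ Hv]].
elim: k v Hv => [|k IH] v /vtxP [a [b [Ha Hs Hb E]]].
  have Ea := deg0 Ha.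
  have Hab : sr a = rg b by rewrite Hs Hb.
  have -> : v = rg lam by rewrite E (rg_comp Hab) -Hs {1}Ea sr_id.
  by [].
have Hab : sr a = rg b by rewrite Hs Hb.
have : deg a = addN2 (0,k) e2 by rewrite Ha /addN2 /= addn1.
move=> /uf_ex [a1 [g [Ha1 Hg Hag Ec]]].
have Hgb : sr g = rg b by rewrite -Hab -Ec sr_comp.
have E2 : lam = cmp a1 (cmp g b) by rewrite E -Ec (comp_assoc Hag Hgb).
have Hv1 : vtx lam (0,k) (sr a1).
  by apply/vtxP; exists a1, (cmp g b); split => //; rewrite rg_comp.
have Hsg : sr a = sr g by rewrite -Ec sr_comp.
by rewrite -Hs Hsg (HP g Hg) -Hag; exact: IH.
Qed.

Lemma cycle_same (G : twograph) (lam : mor G) (Phi : obj G -> Prop) v w :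
  red_path lam -> (forall f, red f -> (Phi (sr f) <-> Phi (rg f))) ->
  on_path lam v -> on_path lam w -> Phi v -> Phi w.
Proof.
move=> Hr HP Hv Hw.
by rewrite (cycle_const Hr HP Hv) (cycle_const Hr HP Hw).
Qed.

Lemma split_r (G : twograph) (lam : mor G) w : iso_red_cycle lam -> on_path lam w ->
  exists a b, [/\ lam = cmp a b, sr a = w, rg b = w & leN2 (addN2 (deg a) e2) (deg lam)].
Proof.
move=> Hc Hw; have [Hd1 Hd2] := cyc_deg Hc; case: Hc => [[_ Hrs _] _ Hr].
move/(on_pathP _ Hr): Hw => [k [Hk /vtxP [a [b [Ha Hs Hb E]]]]].
have Hab : sr a = rg b by rewrite Hs Hb.
have Hdb := deg_comp Hab; rewrite -E in Hdb.
case: (ltnP k (deg lam).2) => Hlt.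
  by exists a, b; split => //; solve2.
have Hb0 : deg b = zero2 by solve2.
have El : lam = a by rewrite E comp0r.
have Hw : w = rg lam by rewrite Hrs El Hs.
exists (idv w), lam; split.
- by rewrite Hw comp_id_l.
- by rewrite sr_id.
- by [].
- rewrite deg_id; solve2.
Qed.

Lemma split_l (G : twograph) (lam : mor G) w : iso_red_cycle lam -> on_path lam w ->
  exists a b, [/\ lam = cmp a b, sr a = w, rg b = w & leN2 (addN2 e2 (deg b)) (deg lam)].
Proof.
move=> Hc Hw; have [Hd1 Hd2] := cyc_deg Hc; case: Hc => [[_ Hrs _] _ Hr].
move/(on_pathP _ Hr): Hw => [k [Hk /vtxP [a [b [Ha Hs Hb E]]]]].
have Hab : sr a = rg b by rewrite Hs Hb.
have Hdb := deg_comp Hab; rewrite -E in Hdb.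
case: (posnP k) => Hk0; last first.
  by exists a, b; split => //; solve2.
have Ha0 : deg a = zero2 by rewrite Ha Hk0.
have El : lam = b by rewrite E comp0l.
have Hw : w = sr lam by rewrite -Hrs El -Hb.
exists lam, (idv w); split.
- by rewrite Hw comp_id_r.
- by [].
- by rewrite rg_id.
- rewrite deg_id; solve2.
Qed.

Lemma cyc_prefix (G : twograph) (lam a b g : mor G) : iso_red_cycle lam -> lam = cmp a b ->
  sr a = rg b -> leN2 (addN2 (deg a) e2) (deg lam) -> red g -> rg g = sr a ->
  exists y, b = cmp g y /\ sr g = rg y.
Proof.
move=> [_ Hiso _] E Hab Hle Hg Hga.
have Hag : sr a = rg g by [].
have Hdag : deg (cmp a g) = addN2 (deg a) e2 by rewrite deg_comp // Hg.
have [H1 _] := Hiso _ Hle.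
have Hrg : rg (cmp a g) = rg lam by rewrite E !rg_comp.
case: (H1 _ Hrg Hdag) => x [y [Hx _ Hxs Hys E2]].
have Hgy : sr g = rg y by rewrite -Hys sr_comp.
have E3 : lam = cmp (cmp a g) y by rewrite E2 comp0l // rg_comp.
rewrite -(comp_assoc Hag Hgy) E in E3.
have Hs2 : sr a = rg (cmp g y) by rewrite rg_comp.
have [_ ->] := uf_injl Hab Hs2 erefl E3.
by exists y.
Qed.

Lemma cyc_suffix (G : twograph) (lam a b g : mor G) : iso_red_cycle lam -> lam = cmp a b ->
  sr a = rg b -> leN2 (addN2 e2 (deg b)) (deg lam) -> red g -> sr g = rg b ->
  exists x, a = cmp x g /\ sr x = rg g.
Proof.
move=> [_ Hiso _] E Hab Hle Hg Hgb.
have Hdgb : deg (cmp g b) = addN2 e2 (deg b) by rewrite deg_comp // Hg.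
have [_ H2] := Hiso _ Hle.
have Hsr : sr (cmp g b) = sr lam by rewrite E !sr_comp.
case: (H2 _ Hsr Hdgb) => x [y [Hx _ Hxs Hys E2]].
have Hdl : deg lam = addN2 (deg x) (addN2 (deg (cmp g b)) (deg y)).
  by rewrite E2 deg_comp ?deg_comp // rg_comp.
have Hy0 : deg y = zero2 by solve2.
rewrite (comp0r Hy0) in E2; last by rewrite -Hys.
have Hxg : sr x = rg g by rewrite Hxs rg_comp.
rewrite (comp_assoc Hxg Hgb) E in E2.
have Hs2 : sr (cmp x g) = rg b by rewrite sr_comp.
have [-> _] := uf_injr Hab Hs2 erefl E2.
by exists x.
Qed.

Definition allcyc (G : twograph) :=
  forall v : obj G, exists lam, iso_red_cycle lam /\ on_path lam v.

Lemma redin_ex (G : twograph) (w : obj G) : allcyc G -> exists g, red g /\ rg g = w.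
Proof.
move=> /(_ w) [lam [Hc Hw]].
have [a [b [E Hs Hb Hle]]] := split_r Hc Hw.
have Hab : sr a = rg b by rewrite Hs Hb.
have Hdb := deg_comp Hab; rewrite -E in Hdb.
have : deg b = addN2 e2 (subN2 (deg b) e2) by solve2.
move=> /uf_ex [g [y [Hg Hy Hgy Ec]]].
by exists g; split => //; rewrite -Hb -Ec rg_comp.
Qed.

Lemma redin_uniq (G : twograph) (g g' : mor G) : allcyc G -> red g -> red g' ->
  rg g = rg g' -> g = g'.
Proof.
move=> /(_ (rg g)) [lam [Hc Hw]] Hg Hg' E.
have [a [b [El Hs Hb Hle]]] := split_r Hc Hw.
have Hab : sr a = rg b by rewrite Hs Hb.
have [y [Eb Hgy]] := cyc_prefix Hc El Hab Hle Hg (esym Hs).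
have [y' [Eb' Hgy']] := cyc_prefix Hc El Hab Hle Hg' (etrans (esym E) (esym Hs)).
have Hd : deg g = deg g' by rewrite Hg Hg'.
rewrite Eb in Eb'.
by case: (uf_injl Hgy Hgy' Hd Eb').
Qed.

Lemma redout_ex (G : twograph) (w : obj G) : allcyc G -> exists g, red g /\ sr g = w.
Proof.
move=> /(_ w) [lam [Hc Hw]].
have [a [b [E Hs Hb Hle]]] := split_l Hc Hw.
have Hab : sr a = rg b by rewrite Hs Hb.
have Hdb := deg_comp Hab; rewrite -E in Hdb.
have : deg a = addN2 (subN2 (deg a) e2) e2 by solve2.
move=> /uf_ex [x [g [Hx Hg Hxg Ec]]].
by exists g; split => //; rewrite -Hs -Ec sr_comp.
Qed.

Lemma redout_uniq (G : twograph) (g g' : mor G) : allcyc G -> red g -> red g' ->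
  sr g = sr g' -> g = g'.
Proof.
move=> /(_ (sr g)) [lam [Hc Hw]] Hg Hg' E.
have [a [b [El Hs Hb Hle]]] := split_l Hc Hw.
have Hab : sr a = rg b by rewrite Hs Hb.
have [x [Ea Hxg]] := cyc_suffix Hc El Hab Hle Hg (esym Hb).
have [x' [Ea' Hxg']] := cyc_suffix Hc El Hab Hle Hg' (etrans (esym E) (esym Hb)).
have Hd : deg g = deg g' by rewrite Hg Hg'.
rewrite Ea in Ea'.
by case: (uf_injr Hxg Hxg' Hd Ea').
Qed.

Lemma on_red_in (G : twograph) (lam g : mor G) w : iso_red_cycle lam -> on_path lam w ->
  red g -> rg g = w -> on_path lam (sr g).
Proof.
move=> Hc Hw Hg Hgw.
have [a [b [El Hs Hb Hle]]] := split_r Hc Hw.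
have Hab : sr a = rg b by rewrite Hs Hb.
have Hag : sr a = rg g by rewrite Hs Hgw.
have [y [Eb Hgy]] := cyc_prefix Hc El Hab Hle Hg (esym Hag).
exists (deg (cmp a g)); split.
  by rewrite deg_comp // Hg.
apply/vtxP; exists (cmp a g), y; split => //.
- by rewrite sr_comp.
- by rewrite El Eb (comp_assoc Hag Hgy).
Qed.

Lemma on_red_out (G : twograph) (lam g : mor G) w : iso_red_cycle lam -> on_path lam w ->
  red g -> sr g = w -> on_path lam (rg g).
Proof.
move=> Hc Hw Hg Hgw.
have [a [b [El Hs Hb Hle]]] := split_l Hc Hw.
have Hab : sr a = rg b by rewrite Hs Hb.
have Hgb : sr g = rg b by rewrite Hb Hgw.
have [x [Ea Hxg]] := cyc_suffix Hc El Hab Hle Hg Hgb.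
exists (deg x); split.
  have Hdl := deg_comp Hab; rewrite -El in Hdl.
  have Hda := deg_comp Hxg; rewrite -Ea in Hda.
  solve2.
apply/vtxP; exists x, (cmp g b); split => //.
- by rewrite rg_comp.
- by rewrite El Ea (comp_assoc Hxg Hgb).
Qed.

Lemma vtx_fun (G : twograph) (lam : mor G) k v v' : vtx lam k v -> vtx lam k v' -> v = v'.
Proof.
move=> /vtxP [a [b [Ha Hs Hb E]]] /vtxP [a' [b' [Ha' Hs' Hb' E']]].
have Hab : sr a = rg b by rewrite Hs Hb.
have Hab' : sr a' = rg b' by rewrite Hs' Hb'.
rewrite E in E'; have Hd : deg a = deg a' by rewrite Ha Ha'.
by case: (uf_injl Hab Hab' Hd E') => Ea _; rewrite -Hs -Hs' Ea.
Qed.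

Lemma on_path_finite (G : twograph) (lam : mor G) : iso_red_cycle lam ->
  finite_set (on_path lam).
Proof.
move=> Hc; have Hr : red_path lam by case: Hc.
apply: (@finite_index _ _ (fun k v => vtx lam (0,k) v) (deg lam).2.+1).
  by move=> x /(on_pathP _ Hr) [k [Hk Hv]]; exists k; split.
by move=> k x y; apply: vtx_fun.
Qed.

Lemma EA_step (G : twograph) (S : obj G -> Prop) (f : mor G) k : allcyc G ->
  (forall g, red g -> (S (rg g) <-> S (sr g))) -> red f ->
  has_card (fun e => blue e /\ rg e = sr f /\ S (sr e)) k <->
  has_card (fun e => blue e /\ rg e = rg f /\ S (sr e)) k.
Proof.
move=> Hcyc HS Hf.
apply: (@has_card_bij_iff _ _ _ _
   (fun e e' => exists g, [/\ red g, sr e' = rg g & cmp f e = cmp e' g])).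
- move=> e [Hb [Hr Hs]].
  have Hfe : sr f = rg e by [].
  have : deg (cmp f e) = addN2 e1 e2 by rewrite deg_comp // Hf Hb.
  move=> /uf_ex [e' [g [He' Hg Hs' Ec]]].
  exists e'; split; last by exists g.
  split => //; split; first by rewrite -[rg e'](rg_comp Hs') Ec rg_comp.
  rewrite Hs' HS // -[sr g](sr_comp Hs') Ec sr_comp //.
- move=> e' [Hb' [Hr' Hs']].
  have [g [Hg Hgr]] := redin_ex (sr e') Hcyc.
  have He'g : sr e' = rg g by [].
  have : deg (cmp e' g) = addN2 e2 e1 by rewrite deg_comp // Hg Hb'.
  move=> /uf_ex [f' [e [Hf' He Hs Ec]]].
  have Ef : f' = f.
    apply: redin_uniq => //.
    by rewrite -[rg f'](rg_comp Hs) Ec rg_comp.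
  subst f'; exists e; split; last by exists g.
  split => //; split => //.
  by rewrite -[sr e](sr_comp Hs) Ec sr_comp // -HS // Hgr.
- move=> x x' y [Hx [Hxr _]] [Hx' [Hxr' _]] _ [g1 [Hg1 Hs1 E1]] [g2 [Hg2 Hs2 E2]].
  have Eg : g1 = g2 by apply: redin_uniq => //; rewrite -Hs1 -Hs2.
  subst g2; rewrite -E2 in E1.
  by case: (uf_injl (esym Hxr) (esym Hxr') erefl E1).
- move=> x y y' _ [Hy _] [Hy' _] [g1 [Hg1 Hs1 E1]] [g2 [Hg2 Hs2 E2]].
  rewrite E1 in E2; have Hd : deg y = deg y' by rewrite Hy Hy'.
  by case: (uf_injl Hs1 Hs2 Hd E2).
Qed.

Lemma EB_step (G : twograph) (T : obj G -> Prop) (f : mor G) k : allcyc G ->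
  (forall g, red g -> (T (rg g) <-> T (sr g))) -> red f ->
  has_card (fun e => blue e /\ T (rg e) /\ sr e = rg f) k <->
  has_card (fun e => blue e /\ T (rg e) /\ sr e = sr f) k.
Proof.
move=> Hcyc HT Hf.
apply: (@has_card_bij_iff _ _ _ _
   (fun e e' => exists g, [/\ red g, sr g = rg e' & cmp e f = cmp g e'])).
- move=> e [Hb [HTe Hs]].
  have Hef : sr e = rg f by [].
  have : deg (cmp e f) = addN2 e2 e1 by rewrite deg_comp // Hf Hb.
  move=> /uf_ex [g [e' [Hg He' Hs' Ec]]].
  exists e'; split; last by exists g.
  split => //; split; last by rewrite -[sr e'](sr_comp Hs') Ec sr_comp.
  rewrite -Hs' -HT // -[rg g](rg_comp Hs') Ec rg_comp //.
- move=> e' [Hb' [HT' Hs']].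
  have [g [Hg Hgs]] := redout_ex (rg e') Hcyc.
  have Hge' : sr g = rg e' by [].
  have : deg (cmp g e') = addN2 e1 e2 by rewrite deg_comp // Hg Hb'.
  move=> /uf_ex [e [f' [He Hf' Hs Ec]]].
  have Ef : f' = f.
    apply: redout_uniq => //.
    by rewrite -[sr f'](sr_comp Hs) Ec sr_comp.
  subst f'; exists e; split; last by exists g.
  split => //; split => //.
  by rewrite -[rg e](rg_comp Hs) Ec rg_comp // HT // Hgs.
- move=> x x' y [Hx [_ Hxs]] [Hx' [_ Hxs']] _ [g1 [Hg1 Hs1 E1]] [g2 [Hg2 Hs2 E2]].
  have Eg : g1 = g2 by apply: redout_uniq => //; rewrite Hs1 Hs2.
  subst g2; rewrite -E2 in E1.
  by case: (uf_injr Hxs Hxs' erefl E1).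
- move=> x y y' _ [Hy _] [Hy' _] [g1 [Hg1 Hs1 E1]] [g2 [Hg2 Hs2 E2]].
  rewrite E1 in E2; have Hd : deg y = deg y' by rewrite Hy Hy'.
  by case: (uf_injr Hs1 Hs2 Hd E2).
Qed.

Unset Implicit Arguments.

Theorem lemma4p2 (G : twograph) (N : option nat) (level : obj G -> nat)
    (c : nat -> nat) (Vs : forall n, 'I_(c n) -> obj G -> Prop) :
  bratteli N level ->
  (forall n, in_depth N n -> cycle_enum level n (Vs n)) ->
  forall n, lt_depth N n ->
  exists (A B : 'M[nat]_(c n.+1, c n)) (t : 'I_(c n) -> nat) (t' : 'I_(c n.+1) -> nat),
    (* T_n(j,j) = |V_{n,j}|, T_{n+1}(i,i) = |V_{n+1,i}| *)
        (forall j, has_card (Vs n j) (t j)) /\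
        (forall i, has_card (Vs n.+1 i) (t' i)) /\
        (* (1) *)
        (forall i j v, Vs n j v ->
           has_card (fun e => blue e /\ rg e = v /\ Vs n.+1 i (sr e)) (A i j)) /\
        (* (2) *)
        (forall i j w, Vs n.+1 i w ->
           has_card (fun e => blue e /\ Vs n j (rg e) /\ sr e = w) (B i j)) /\
        (* (3) *)
        (forall i j, exists k,
           [/\ has_card (fun e => blue e /\ Vs n j (rg e) /\ Vs n.+1 i (sr e)) k,
               (A i j * t j)%N = k & k = (t' i * B i j)%N]) /\
        (* no zero rows or columns *)
        [/\ (forall i, exists j, A i j <> 0%N), (forall j, exists i, A i j <> 0%N),
            (forall i, exists j, B i j <> 0%N) & (forall j, exists i, B i j <> 0%N)] /\
        (* A_n T_n = T_{n+1} B_n *)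
        (A *m diag_mx (\row_j t j) = diag_mx (\row_i t' i) *m B)%R.
Proof.
move=> [Hrf [Hdep [Hlev [Hblue [Hsrc [Hrgb [Hcyc Hredlev]]]]]]] Hcen n Hn.
have Hcyc' : allcyc G := Hcyc.
have Hdn : in_depth N n by case: N Hn {Hrgb Hcen Hlev Hdep} => //= N0; lia.
have Hdn1 : in_depth N n.+1 by case: N Hn {Hrgb Hcen Hlev Hdep Hdn} => //= N0.
have VsP : forall m, in_depth N m -> forall j, exists lam, [/\ iso_red_cycle lam,
    forall v, Vs m j v <-> on_path lam v & exists v, on_path lam v /\ level v = m].
  by move=> m Hm j; case: (Hcen m Hm) => H1 _ _; apply: H1.
have Vclosed : forall m, in_depth N m -> forall j g, red g -> (Vs m j (rg g) <-> Vs m j (sr g)).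
  move=> m Hm j g Hg; have [lam [Hc HV _]] := VsP m Hm j.
  rewrite !HV; split => H; [exact: on_red_in Hc H Hg erefl | exact: on_red_out Hc H Hg erefl].
have Vlevel : forall m, in_depth N m -> forall j v, Vs m j v -> level v = m.
  move=> m Hm j v Hv; have [lam [Hc HV [v0 [Hv0 Hl0]]]] := VsP m Hm j.
  have Hr : red_path lam by case: Hc.
  apply: (@cycle_same _ lam (fun v => level v = m) v0 v Hr) => //; last by apply/HV.
  by move=> f Hf /=; rewrite (Hredlev f Hf).
have Vmem : forall m, in_depth N m -> forall v, level v = m -> exists j, Vs m j v.
  move=> m Hm v Hl; have [lam [Hc Hv]] := Hcyc v.
  case: (Hcen m Hm) => _ H2 _.
  have [j Hj] := H2 lam Hc (ex_intro _ v (conj Hv Hl)).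
  by exists j; apply/Hj.
have Vne : forall m, in_depth N m -> forall j, exists v, Vs m j v.
  move=> m Hm j; have [lam [Hc HV [v0 [Hv0 _]]]] := VsP m Hm j.
  by exists v0; apply/HV.
have Vfin : forall m, in_depth N m -> forall j, exists t, has_card (Vs m j) t.
  move=> m Hm j; have [lam [Hc HV _]] := VsP m Hm j.
  have [t Ht] := on_path_finite Hc.
  exists t; apply: (has_card_ext _ _ _ _ _ Ht) => v; by rewrite HV.
have [ft Hft] := fchoice _ _ (Vfin n Hdn).
have [ft' Hft'] := fchoice _ _ (Vfin n.+1 Hdn1).
pose EA i v := fun e : mor G => blue e /\ rg e = v /\ Vs n.+1 i (sr e).
have EAfin : forall i v, finite_set (EA i v).
  move=> i v; have [k [s [_ _ Hs]]] := Hrf v e1.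
  by apply: (finite_sub _ _ s) => e [He [Hr _]]; apply/Hs.
have Aex : forall ij : 'I_(c n.+1) * 'I_(c n), exists a,
    forall v, Vs n ij.2 v -> has_card (EA ij.1 v) a.
  move=> [i j] /=; have [v0 Hv0] := Vne n Hdn j.
  have [a Ha] := EAfin i v0.
  exists a => v Hv; have [lam [Hc HV _]] := VsP n Hdn j.
  have Hr : red_path lam by case: Hc.
  apply: (@cycle_same _ lam (fun v => has_card (EA i v) a) v0 v Hr) => //; try by apply/HV.
  move=> f Hf /=; apply: EA_step => //.
  by move=> g Hg; apply: Vclosed.
have [fA HA] := fchoice _ _ Aex.
have Ecount : forall i j, has_card (fun e => blue e /\ Vs n j (rg e) /\ Vs n.+1 i (sr e))
    (fA (i, j) * ft j).
  move=> i j.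
  have := @has_card_fiber _ _ (@rg G) (fun e => blue e /\ Vs n.+1 i (sr e)) (Vs n j)
    (ft j) (fA (i, j)) (Hft j).
  move=> H; apply: (has_card_ext _ _ _ _ _ (H _)).
    by move=> e; split => [[[? ?] ?]|[? [? ?]]].
  move=> v Hv; apply: (has_card_ext _ _ _ _ _ (HA (i, j) v Hv)).
  by move=> e; split => [[? [? ?]]|[[? ?] ?]].
pose EB j w := fun e : mor G => blue e /\ Vs n j (rg e) /\ sr e = w.
have EBfin : forall i j w, Vs n.+1 i w -> finite_set (EB j w).
  move=> i j w Hw; have [s [_ _ Hs]] := Ecount i j.
  apply: (finite_sub _ _ s) => e [He [Hr Hse]]; apply/Hs; split => //; split => //.
  by rewrite Hse.
have Bex : forall ij : 'I_(c n.+1) * 'I_(c n), exists b,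
    forall w, Vs n.+1 ij.1 w -> has_card (EB ij.2 w) b.
  move=> [i j] /=; have [w0 Hw0] := Vne n.+1 Hdn1 i.
  have [b Hb] := EBfin i j w0 Hw0.
  exists b => w Hw; have [lam [Hc HV _]] := VsP n.+1 Hdn1 i.
  have Hr : red_path lam by case: Hc.
  apply: (@cycle_same _ lam (fun w => has_card (EB j w) b) w0 w Hr) => //; try by apply/HV.
  move=> f Hf /=; symmetry; apply: EB_step => //.
  by move=> g Hg; apply: Vclosed.
have [fB HB] := fchoice _ _ Bex.
have Bcount : forall i j, has_card (fun e => blue e /\ Vs n j (rg e) /\ Vs n.+1 i (sr e))
    (fB (i, j) * ft' i).
  move=> i j.
  have := @has_card_fiber _ _ (@sr G) (fun e => blue e /\ Vs n j (rg e)) (Vs n.+1 i)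
    (ft' i) (fB (i, j)) (Hft' i).
  move=> H; apply: (has_card_ext _ _ _ _ _ (H _)).
    by move=> e; split => [[[? ?] ?]|[? [? ?]]].
  move=> w Hw; apply: (has_card_ext _ _ _ _ _ (HB (i, j) w Hw)).
  by move=> e; split => [[? [? ?]]|[[? ?] ?]].
have Eq : forall i j, (fA (i, j) * ft j = ft' i * fB (i, j))%N.
  by move=> i j; rewrite (has_card_uniq _ _ _ _ (Ecount i j) (Bcount i j)) mulnC.
exists (\matrix_(i, j) fA (i, j))%R, (\matrix_(i, j) fB (i, j))%R, ft, ft'.
split; first exact: Hft.
split; first exact: Hft'.
split; first by move=> i j v Hv; rewrite mxE; apply: (HA (i, j)).
split; first by move=> i j w Hw; rewrite mxE; apply: (HB (i, j)).
split.
  move=> i j; exists (fA (i, j) * ft j)%N; split; rewrite ?mxE //.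
split; last first.
  apply/matrixP => i j; rewrite mul_mx_diag mul_diag_mx !mxE.
  exact: Eq.
have rowP : forall i, exists j (e : mor G), [/\ blue e, Vs n j (rg e) & Vs n.+1 i (sr e)].
  move=> i; have [w0 Hw0] := Vne n.+1 Hdn1 i.
  have Hl := Vlevel _ Hdn1 _ _ Hw0.
  have [e [He Hes]] : exists e, blue e /\ sr e = w0.
    apply: NNPP => H.
    have := Hsrc w0 (fun e Hb Hs => H (ex_intro _ e (conj Hb Hs))).
    by rewrite Hl.
  have Hle : level (rg e) = n.
    by have := Hblue e He; rewrite Hes Hl; case.
  have [j Hj] := Vmem n Hdn _ Hle.
  by exists j, e; split => //; rewrite Hes.
have colP : forall j, exists i (e : mor G), [/\ blue e, Vs n j (rg e) & Vs n.+1 i (sr e)].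
  move=> j; have [v0 Hv0] := Vne n Hdn j.
  have Hl := Vlevel _ Hdn _ _ Hv0.
  have [e [He Her]] : exists e, blue e /\ rg e = v0.
    apply: NNPP => H.
    have := Hrgb v0 (fun e Hb Hs => H (ex_intro _ e (conj Hb Hs))).
    rewrite Hl => EN; rewrite EN /= in Hn; lia.
  have Hle : level (sr e) = n.+1.
    by rewrite (Hblue e He) Her Hl.
  have [i Hi] := Vmem n.+1 Hdn1 _ Hle.
  by exists i, e; split => //; rewrite Her.
have Apos : forall i j (e : mor G), [/\ blue e, Vs n j (rg e) & Vs n.+1 i (sr e)] ->
    fA (i, j) <> 0.
  move=> i j e [He Hr Hs].
  by apply: (has_card_pos _ _ _ e (HA (i, j) (rg e) Hr)).
have Bpos : forall i j (e : mor G), [/\ blue e, Vs n j (rg e) & Vs n.+1 i (sr e)] ->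
    fB (i, j) <> 0.
  move=> i j e [He Hr Hs].
  by apply: (has_card_pos _ _ _ e (HB (i, j) (sr e) Hs)).
split.
- move=> i; have [j [e He]] := rowP i; exists j; rewrite mxE; exact: Apos He.
- move=> j; have [i [e He]] := colP j; exists i; rewrite mxE; exact: Apos He.
- move=> i; have [j [e He]] := rowP i; exists j; rewrite mxE; exact: Bpos He.
- move=> j; have [i [e He]] := colP j; exists i; rewrite mxE; exact: Bpos He.
Qed.
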